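(* Consider any step of Reverse SeqPAV at which the current set of not-yet-removed alternatives is $S$, and let $N'\subseteq N$ with $z=\sum_{i\in N'}|A_i\cap S|>0$. Suppose that at this step Reverse SeqPAV removes alternative $a\in S$ and that $z'=\sum_{i\in N'}|A_i\cap(S\setminus\{a\})|<z$. Then for every $b\in S$, $w_{\mathrm{PAV}}(S)-w_{\mathrm{PAV}}(S\setminus\{b\})\ge\frac{(z-z')^2}{z}$.
   Context: Let $N=[n]$ be a finite set of voters and $A$ a finite set of $m$ alternatives; a profile $P=(A_1,\dots,A_n)$ gives each voter $i$ a non-empty approval set $A_i\subseteq A$. For $S\subseteq A$, $w_{\mathrm{PAV}}(S)=\sum_{i\in N}\sum_{j=1}^{|A_i\cap S|}\frac1j$. Reverse SeqPAV builds a ranking from the bottom: it starts with $S=A$ and the empty ranking, and at each step picks $a\in S$ minimizing $w_{\mathrm{PAV}}(S)-w_{\mathrm{PAV}}(S\setminus\{a\})$ (ties broken arbitrarily), removes $a$ from $S$ and prepends it to the ranking, until $S$ is empty. *)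

(* Defs.v *)
From HB Require Import structures.
From mathcomp Require Import all_boot all_order all_algebra.
Set Implicit Arguments. Unset Strict Implicit. Unset Printing Implicit Defensive.
Import Order.TTheory GRing.Theory Num.Theory.
Local Open Scope ring_scope.

Definition profile (n : nat) (Alt : finType) := 'I_n -> {set Alt}.

Definition harm (k : nat) : rat := \sum_(j < k) ((j.+1)%:R)^-1.

Definition wPAV (n : nat) (Alt : finType) (P : profile n Alt) (S : {set Alt}) : rat :=
  \sum_(i < n) harm #|P i :&: S|.

Definition marg (n : nat) (Alt : finType) (P : profile n Alt) (S : {set Alt}) (a : Alt) : rat :=
  wPAV P S - wPAV P (S :\ a).

(* a is a valid choice of Reverse SeqPAV at the current set S
   (any tie-breaking allowed). *)
Definition rseq_choice (n : nat) (Alt : finType) (P : profile n Alt) (S : {set Alt}) (a : Alt) : Prop :=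
  a \in S /\ forall b, b \in S -> marg P S a <= marg P S b.

Inductive rseq_reachable (n : nat) (Alt : finType) (P : profile n Alt) : {set Alt} -> Prop :=
| rseq_start : rseq_reachable P setT
| rseq_step : forall S a, rseq_reachable P S -> rseq_choice P S a ->
    rseq_reachable P (S :\ a).

(* Main.v *)
Require Import Defs.
From HB Require Import structures.
From mathcomp Require Import all_boot all_order all_algebra.
From mathcomp Require Import ring lra.
Import Order.TTheory GRing.Theory Num.Theory.
Local Open Scope ring_scope.

Lemma harmS k : harm k.+1 = harm k + (k.+1)%:R^-1.
Proof. by rewrite /harm big_ord_recr. Qed.

Lemma inv_bound (c t : rat) : 0 < c -> 2 * t - t ^+ 2 * c <= c^-1.
Proof.
move=> c0.
have : 0 <= c * (c^-1 - (2 * t - t ^+ 2 * c)).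
  have -> : c * (c^-1 - (2 * t - t ^+ 2 * c)) = (1 - t * c) ^+ 2.
    by rewrite mulrBr mulfV ?gt_eqF //; ring.
  exact: sqr_ge0.
by rewrite pmulr_rge0 // subr_ge0.
Qed.

Lemma per_voter (Alt : finType) (A S : {set Alt}) (a : Alt) (t : rat) :
  a \in S ->
  ((#|A :&: S| - #|A :&: (S :\ a)|)%:R * (2 * t) - t ^+ 2 * #|A :&: S|%:R
     <= harm #|A :&: S| - harm #|A :&: (S :\ a)|) /\
  (0 <= harm #|A :&: S| - harm #|A :&: (S :\ a)|) /\
  (#|A :&: (S :\ a)| <= #|A :&: S|)%N.
Proof.
move=> aS.
have [aA|aA] := boolP (a \in A).
  have aAS : a \in A :&: S by rewrite inE aA aS.
  have E : A :&: (S :\ a) = (A :&: S) :\ a by rewrite setIDA.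
  have := cardsD1 a (A :&: S); rewrite aAS E => ->.
  rewrite add1n subSnn harmS addrAC subrr add0r.
  set c := #|_ :\ a|.
  split; last split; last by apply: leqnSn.
    rewrite mul1r -[(c.+1)%:R]/((c.+1)%:R : rat).
    by apply: inv_bound; rewrite ltr0n.
  by rewrite invr_ge0 ler0n.
have E : A :&: (S :\ a) = A :&: S.
  apply/setP=> x; rewrite !inE; case: eqP => // ->.
  by rewrite (negbTE aA).
rewrite E subnn subrr mul0r sub0r oppr_le0; split; last by split.
by rewrite mulr_ge0 ?sqr_ge0 ?ler0n.
Qed.

Theorem lemma1 (n : nat) (Alt : finType) (P : profile n Alt)
  (HP : forall i : 'I_n, P i != set0)
  (S : {set Alt}) (HS : rseq_reachable P S)
  (N' : {set 'I_n}) (a : Alt)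
  (z := \sum_(i in N') #|P i :&: S|)
  (z' := \sum_(i in N') #|P i :&: (S :\ a)|)
  (Hz : (0 < z)%N)
  (Ha : rseq_choice P S a)
  (Hz' : (z' < z)%N) :
  forall b, b \in S ->
    marg P S b >= ((z - z')%:R) ^+ 2 / z%:R.
Proof.
move=> b bS; case: Ha => aS Hmin.
apply: le_trans (Hmin b bS).
set d : rat := (z - z')%:R.
set t : rat := d / z%:R.
have z0 : (z%:R : rat) != 0 by rewrite pnatr_eq0 -lt0n.
pose f i := harm #|P i :&: S| - harm #|P i :&: (S :\ a)|.
have -> : marg P S a = \sum_(i < n) f i by rewrite /marg /wPAV -sumrB.
apply: (@le_trans _ _ (\sum_(i in N') f i)); last first.
  rewrite [X in _ <= X](bigID (fun i => i \in N')) /= lerDl.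
  by apply: sumr_ge0 => i _; case: (@per_voter _ (P i) S a t aS) => _ [].
apply: (@le_trans _ _ (\sum_(i in N')
   ((#|P i :&: S| - #|P i :&: (S :\ a)|)%:R * (2 * t) - t ^+ 2 * #|P i :&: S|%:R))); last first.
  by apply: ler_sum => i _; case: (@per_voter _ (P i) S a t aS).
rewrite sumrB -mulr_suml -mulr_sumr.
have -> : \sum_(i in N') ((#|P i :&: S| - #|P i :&: (S :\ a)|)%:R : rat) = d.
  rewrite /d natrB; last exact: ltnW.
  rewrite /z /z' !natr_sum -sumrB; apply: eq_bigr => i _.
  by rewrite natrB //; case: (@per_voter _ (P i) S a t aS) => _ [].
rewrite -natr_sum -/z /t; rewrite le_eqVlt; apply/orP; left; apply/eqP; field; exact: z0.
Qed.
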